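(* Let $n\ge 2$. The function $\mathbf{H}:[0,1]^n\to[0,1]$ has no neutral element, i.e. there is no $e\in[0,1]$ such that $\mathbf{H}(e,\dots,e,t,e,\dots,e)=t$ for every $t\in[0,1]$ placed at any coordinate.
   Context: For $\mathbf{x}\in[0,1]^n$ let $x_{(1)}\ge\dots\ge x_{(n)}$ be its entries in decreasing order, and define the median $Med(\mathbf{x})=\frac12(x_{(k)}+x_{(k+1)})$ if $n=2k$ and $Med(\mathbf{x})=x_{(k+1)}$ if $n=2k+1$. Define $f_i(\mathbf{x})=\frac1n$ if $x_1=\dots=x_n$, and otherwise $f_i(\mathbf{x})=\frac{1}{n-1}\Big(1-\frac{|x_i-Med(\mathbf{x})|}{\sum_{j=1}^n|x_j-Med(\mathbf{x})|}\Big)$. Then $\mathbf{H}(\mathbf{x})=\sum_{i=1}^n f_i(\mathbf{x})\,x_i$. *)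

(* Defs.v *)
From mathcomp Require Import all_boot all_order all_algebra.
From mathcomp Require Import reals.
Set Implicit Arguments. Unset Strict Implicit. Unset Printing Implicit Defensive.
Import Order.TTheory GRing.Theory Num.Theory.
Local Open Scope ring_scope.

Section H.
Variable R : realType.

Definition dec_sorted (n : nat) (x : 'I_n -> R) : seq R :=
  sort (fun a b : R => b <= a) [seq x i | i <- enum 'I_n].

(* x_(j), 1-based *)
Definition ord_stat (n : nat) (x : 'I_n -> R) (j : nat) : R :=
  nth 0 (dec_sorted x) j.-1.

Definition Med (n : nat) (x : 'I_n -> R) : R :=
  if odd n then ord_stat x (n./2).+1
  else (ord_stat x n./2 + ord_stat x (n./2).+1) / 2.

Definition all_equal (n : nat) (x : 'I_n -> R) : bool :=
  [forall i, forall j, x i == x j].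

Definition f_weight (n : nat) (x : 'I_n -> R) (i : 'I_n) : R :=
  if all_equal x then n%:R^-1
  else (n.-1)%:R^-1 *
       (1 - `|x i - Med x| / (\sum_(j < n) `|x j - Med x|)).

Definition Hagg (n : nat) (x : 'I_n -> R) : R :=
  \sum_(i < n) f_weight x i * x i.

Definition in01 (t : R) : bool := (0 <= t) && (t <= 1).

End H.

(* Main.v *)
Require Import Defs.
From mathcomp Require Import all_boot all_order all_algebra.
From mathcomp Require Import reals.
Import Order.TTheory GRing.Theory Num.Theory.
Local Open Scope ring_scope.
From mathcomp Require Import ring lra.
From mathcomp Require Import ring lra.

Lemma med2 (R : realType) (x : 'I_2 -> R) : Med x = (x ord0 + x ord_max) / 2.
Proof.
rewrite /Med /= /ord_stat /=.
have hs : size (dec_sorted x) = 2%N by rewrite /dec_sorted size_sort size_map size_enum_ord.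
have : \sum_(z <- dec_sorted x) z = \sum_(z <- [seq x i | i <- enum 'I_2]) z.
  by apply: perm_big; rewrite /dec_sorted perm_sort.
rewrite big_map big_enum /= !big_ord_recl big_ord0 addr0.
case: (dec_sorted x) hs => [|a [|b [|]]] //= _.
rewrite !big_cons big_nil addr0 => ->.
congr (_ / 2); congr (_ + x _); exact/val_inj.
Qed.

Lemma alg (R : realFieldType) (N d c e t : R) : N != 0 -> d + N * c != 0 ->
  N^-1 * (1 - d / (d + N * c)) * t + N * (N^-1 * (1 - c / (d + N * c)) * e) = t ->
  (d + (N - 1) * c) * (e - t) = 0.
Proof.
move=> hN hS H.
rewrite -[RHS](mulr0 (N^-1 * (d + N * c) * N)) -(subrr t).
rewrite -{2}H. field; by rewrite hS hN.
Qed.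

Lemma key (R : realType) (n' : nat) (e t : R) (ne : t != e) :
  Hagg (fun i : 'I_n'.+2 => if i == ord0 then t else e) != t.
Proof.
set x := fun i : 'I_n'.+2 => if i == ord0 then t else e.
have hae : all_equal x = false.
  apply/negbTE/negP => /forallP/(_ ord0)/forallP/(_ ord_max).
  by rewrite /x eqxx /= (negbTE ne).
set m := Med x. set d := `|t - m|. set c := `|e - m|.
have hS : \sum_(j < n'.+2) `|x j - m| = d + (n'.+1)%:R * c.
  rewrite (bigD1 ord0) //= {1}/x eqxx; congr (_ + _).
  rewrite (eq_bigr (fun _ => c)); last by move=> j hj; rewrite /x (negbTE hj).
  by rewrite sumr_const cardC1 card_ord /= mulr_natl.
rewrite /Hagg (bigD1 ord0) //= (eq_bigr (fun _ => ((n'.+1)%:R^-1 * (1 - c / (d + (n'.+1)%:R * c))) * e)); last first.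
  by move=> j hj; rewrite /f_weight hae hS /x (negbTE hj).
rewrite sumr_const cardC1 card_ord /= /f_weight hae hS /x eqxx -/x.
set N := (n'.+1)%:R : R.
have hN : 0 < N by rewrite ltr0n.
have hd : 0 <= d by apply: normr_ge0.
have hc : 0 <= c by apply: normr_ge0.
have hS0 : d + N * c != 0.
  apply/negP => /eqP h0.
  have d0 : d = 0 by nra.
  have c0 : c = 0 by nra.
  have ht : t = m by apply/eqP; rewrite -subr_eq0 -normr_eq0 -/d d0.
  have he : e = m by apply/eqP; rewrite -subr_eq0 -normr_eq0 -/c c0.
  by move/eqP: ne; apply; rewrite ht he.
apply/negP => /eqP H.
have E : (d + (N - 1) * c) * (e - t) = 0.
  move: H; rewrite -/m -/d -mulr_natl -/N => H; exact: (@alg R N d c e t (lt0r_neq0 hN) hS0 H).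
move: E => /eqP; rewrite mulf_eq0 subr_eq0 [e == t]eq_sym (negbTE ne) orbF => /eqP E.
have hN1 : 0 <= N - 1 by rewrite /N -natr1 addrK ler0n.
have d0 : d = 0 by nra.
case: (posnP n') => [n0|npos].
  subst n'.
  move: d0; rewrite /d /m med2 /x eqxx /=.
  move/normr0_eq0/eqP; rewrite subr_eq0 => /eqP h.
  move/eqP: ne; apply; lra.
have c0 : c = 0.
  have : 0 < N - 1 by rewrite /N -natr1 addrK ltr0n.
  nra.
have ht : t = m by apply/eqP; rewrite -subr_eq0 -normr_eq0 -/d d0.
have he : e = m by apply/eqP; rewrite -subr_eq0 -normr_eq0 -/c c0.
by move/eqP: ne; apply; rewrite ht he.
Qed.

Theorem proposition12 (R : realType) (n : nat) (hn : (2 <= n)%N) :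
  ~ exists e : R, in01 e /\
      forall (k : 'I_n) (t : R), in01 t ->
        Hagg (fun i : 'I_n => if i == k then t else e) = t.
Proof.
case: n hn => [|[|n']] // _ [e [he H]].
have [e0|e0] := eqVneq e 0.
  have := H ord0 1; rewrite /in01 ler01 lexx => /(_ isT) /eqP.
  by apply/negP; apply: key; rewrite e0 oner_neq0.
have := H ord0 0; rewrite /in01 ler01 lexx => /(_ isT) /eqP.
by apply/negP; apply: key; rewrite eq_sym.
Qed.
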